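(* Let $(G,\sigma)$ be a finite connected signed graph satisfying $CD^{\sigma}(K,N)$ for some $K\in\mathbb{R}$ and $N\in(0,\infty]$. Let $f:V\to\mathbb{R}$ be an eigenfunction of the signed Laplacian $\Delta^{\sigma}$ to a nonzero eigenvalue $\lambda^{\sigma}$, i.e. $-\Delta^\sigma f=\lambda^\sigma f$. Then for all $x\in V$ and all $\alpha>2-2K/\lambda^{\sigma}$, \[ |\nabla^{\sigma}f|^{2}(x)+\alpha\lambda^{\sigma} f^{2}(x)\leq\frac{(\alpha^{2}-\frac{4}{N})\lambda^{\sigma}+2K\alpha}{(\alpha-2)\lambda^{\sigma}+2K}\,\lambda^{\sigma}\cdot \max_{z\in V}f^{2}(z), \] with the convention $\frac1N=0$ if $N=\infty$.
   Context: $G=(V,E)$ is a finite simple connected graph; $x\sim y$ means $\{x,y\}\in E$; $d_x$ is the degree of $x$. A sign is a map $\sigma:E\to\{-1,+1\}$, $\sigma_{xy}:=\sigma(\{x,y\})$; $(G,\sigma)$ is a signed graph. The signed Laplacian is $\Delta^{\sigma}f(x)=\frac{1}{d_x}\sum_{y\sim x}(\sigma_{xy}f(y)-f(x))$, and $\Delta$ denotes the same operator with $\sigma\equiv+1$. For $f,g:V\to\mathbb{R}$: $\Gamma^{\sigma}(f,g)=\frac12\{\Delta(fg)-g\Delta^{\sigma}f-f\Delta^{\sigma}g\}$, $\Gamma_2^{\sigma}(f,g)=\frac12\{\Delta\Gamma^{\sigma}(f,g)-\Gamma^{\sigma}(g,\Delta^{\sigma}f)-\Gamma^{\sigma}(f,\Delta^{\sigma}g)\}$,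 $\Gamma^\sigma(f)=\Gamma^\sigma(f,f)$, $\Gamma_2^\sigma(f)=\Gamma_2^\sigma(f,f)$, and $|\nabla^{\sigma}f|^2(x):=2\Gamma^\sigma(f)(x)=\frac{1}{d_x}\sum_{y\sim x}(\sigma_{xy}f(y)-f(x))^2$. $(G,\sigma)$ satisfies $CD^{\sigma}(K,N)$ ($K\in\mathbb{R}$, $N\in(0,\infty]$) if $\Gamma_2^{\sigma}(f)(x)\ge\frac1N(\Delta^\sigma f)^2(x)+K\Gamma^\sigma(f)(x)$ for all $f:V\to\mathbb{R}$ and all $x\in V$ (with $\frac1N=0$ for $N=\infty$). *)

(* Defs.v *)
From HB Require Import structures.
From mathcomp Require Import all_boot all_order all_algebra.
From mathcomp Require Import constructive_ereal.
Set Implicit Arguments. Unset Strict Implicit. Unset Printing Implicit Defensive.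
Import Order.TTheory GRing.Theory Num.Theory.
Local Open Scope ring_scope.

Section SignedGraph.
Variables (R : realFieldType) (T : finType) (e : rel T).

Definition deg (x : T) : R := (#|[set y | e x y]|)%:R.

Definition slap (sigma : T -> T -> R) (f : T -> R) (x : T) : R :=
  (deg x)^-1 * \sum_(y | e x y) (sigma x y * f y - f x).

Definition lap (f : T -> R) (x : T) : R := slap (fun _ _ => 1) f x.

Definition sGamma (sigma : T -> T -> R) (f g : T -> R) (x : T) : R :=
  2^-1 * (lap (fun z => f z * g z) x - g x * slap sigma f x - f x * slap sigma g x).

Definition sGamma2 (sigma : T -> T -> R) (f g : T -> R) (x : T) : R :=
  2^-1 * (lap (sGamma sigma f g) x - sGamma sigma g (slap sigma f) x
          - sGamma sigma f (slap sigma g) x).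

Definition sgrad2 (sigma : T -> T -> R) (f : T -> R) (x : T) : R :=
  2 * sGamma sigma f f x.

Definition invN (N : \bar R) : R :=
  match N with EFin r => r^-1 | _ => 0 end.

Definition CDs (sigma : T -> T -> R) (K : R) (N : \bar R) : Prop :=
  forall (f : T -> R) (x : T),
    invN N * (slap sigma f x) ^+ 2 + K * sGamma sigma f f x
      <= sGamma2 sigma f f x.

Definition simple_connected_graph : Prop :=
  [/\ symmetric e, irreflexive e & forall x y : T, connect e x y].

(* signature σ : E -> {±1}, represented as a symmetric function on edges *)
Definition signature (sigma : T -> T -> R) : Prop :=
  forall x y, e x y -> sigma x y = sigma y x /\ (sigma x y = 1 \/ sigma x y = -1).

End SignedGraph.

(* Main.v *)
Require Import Defs.
From HB Require Import structures.
From mathcomp Require Import all_boot all_order all_algebra.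
From mathcomp Require Import constructive_ereal ring lra.
Import Order.TTheory GRing.Theory Num.Theory.
Local Open Scope ring_scope.

Lemma slap_lin (R : realFieldType) (T : finType) (e : rel T) s (g h : T -> R) a b x :
  slap e s (fun z => a * g z + b * h z) x = a * slap e s g x + b * slap e s h x.
Proof.
rewrite /slap (_ : \sum_(y | e x y) _ = a * \sum_(y | e x y) (s x y * g y - g x)
   + b * \sum_(y | e x y) (s x y * h y - h x)); first ring.
rewrite !mulr_sumr -big_split; apply: eq_bigr => y _ /=; ring.
Qed.

Lemma deg_mul (R : realFieldType) (T : finType) (e : rel T) (x : T) (h : T -> R) :
  deg R e x * ((deg R e x)^-1 * \sum_(y | e x y) h y) = \sum_(y | e x y) h y.
Proof.
have [d0|nz] := eqVneq (deg R e x) 0; last by rewrite mulrA mulfV ?mul1r.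
rewrite d0 mul0r; move: d0; rewrite /deg => /eqP; rewrite pnatr_eq0 cards_eq0 => /eqP H.
rewrite big_pred0 // => y; apply/negbTE/negP => exy.
have : y \in [set y | e x y] by rewrite inE.
by rewrite H inE.
Qed.

Lemma deg_ge0 (R : realFieldType) (T : finType) (e : rel T) (x : T) : 0 <= deg R e x.
Proof. by rewrite /deg ler0n. Qed.

Lemma sum_lap0 (R : realFieldType) (T : finType) (e : rel T) (g : T -> R) :
  symmetric e -> \sum_x deg R e x * lap e g x = 0.
Proof.
move=> sym; rewrite /lap /slap.
under eq_bigr => x _ do rewrite deg_mul.
under eq_bigr => x _ do rewrite big_mkcond /=.
under eq_bigr => x _ do under eq_bigr => y _ do rewrite mul1r.
set A := \sum_x _.
suff : A = - A by lra.
rewrite {1}/A exchange_big /= -sumrN; apply: eq_bigr => j _; rewrite -sumrN; apply: eq_bigr => i _.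
by rewrite sym; case: (e j i) => //; rewrite ?oppr0 // opprB.
Qed.

Lemma slap_ext (R : realFieldType) (T : finType) (e : rel T) s (g h : T -> R) x :
  (forall z, g z = h z) -> slap e s g x = slap e s h x.
Proof. by move=> H; rewrite /slap; congr (_ * _); apply: eq_bigr => y _; rewrite !H. Qed.

Lemma slap_scale (R : realFieldType) (T : finType) (e : rel T) s (g : T -> R) c x :
  slap e s (fun z => c * g z) x = c * slap e s g x.
Proof.
rewrite (@slap_ext _ _ e s _ (fun z => c * g z + 0 * g z) x); last by move=> z; ring.
by rewrite slap_lin; ring.
Qed.

Lemma gamma_sq (R : realFieldType) (T : finType) (e : rel T) s (f : T -> R) x :
  signature e s ->
  2 * sGamma e s f f x = (deg R e x)^-1 * \sum_(y | e x y) (s x y * f y - f x) ^+ 2.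
Proof.
move=> Hs; rewrite /sGamma /lap /slap.
set d := (deg R e x)^-1.
rewrite (_ : 2 * _ = d * (\sum_(y | e x y) (1 * (f y * f y) - f x * f x)
     - 2 * f x * \sum_(y | e x y) (s x y * f y - f x))); last first.
  by field.
rewrite mulr_sumr -sumrB; congr (_ * _); apply: eq_bigr => y exy.
have [_ [H|H]] := Hs x y exy; rewrite H; ring.
Qed.

Lemma gamma_ge0 (R : realFieldType) (T : finType) (e : rel T) s (f : T -> R) x :
  signature e s -> 0 <= sGamma e s f f x.
Proof.
move=> Hs; have := @gamma_sq _ _ e s f x Hs.
have : 0 <= (deg R e x)^-1 * \sum_(y | e x y) (s x y * f y - f x) ^+ 2.
  by rewrite mulr_ge0 ?invr_ge0 ?deg_ge0 // sumr_ge0 // => y _; rewrite sqr_ge0.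
lra.
Qed.

Lemma le_bigmax0 (R : realFieldType) (T : eqType) (F : T -> R) (r : seq T) i :
  i \in r -> F i <= \big[Num.max/0]_(j <- r) F j.
Proof.
elim: r => // a r IH; rewrite inE big_cons => /orP [/eqP ->|/IH H].
  by rewrite le_max lexx.
by rewrite le_max H orbT.
Qed.

Theorem theorem3p1 (R : realFieldType) (T : finType) (e : rel T)
  (sigma : T -> T -> R) (K : R) (N : \bar R) (f : T -> R) (lam : R) :
  simple_connected_graph e ->
  signature e sigma ->
  (0 < N)%E ->
  CDs e sigma K N ->
  (exists z, f z != 0) ->
  lam != 0 ->
  (forall x, - slap e sigma f x = lam * f x) ->
  forall (x : T) (alpha : R), 2 - 2 * K / lam < alpha ->
    sgrad2 e sigma f x + alpha * lam * f x ^+ 2 <=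
      ((alpha ^+ 2 - 4 * invN N) * lam + 2 * K * alpha)
        / ((alpha - 2) * lam + 2 * K) * lam
        * \big[Num.max/0]_(z : T) (f z ^+ 2).
Proof.
move=> [sym _ _] Hsig HN HCD [z fz] lam0 Heig x alpha Halpha.
set n := invN N.
have n0 : 0 <= n.
  rewrite /n; case: (N) HN => [r Hr| |] //=.
  by rewrite invr_ge0 ltW // -lte_fin.
have Hsl : forall x, slap e sigma f x = - lam * f x.
  by move=> y; rewrite -[LHS]opprK Heig mulNr.
set G := fun y => sGamma e sigma f f y.
set G2 := fun y => sGamma2 e sigma f f y.
have Fact2 : forall y, sGamma e sigma f (slap e sigma f) y = - lam * G y.
  move=> y; rewrite /G /sGamma.
  rewrite (@slap_ext _ _ e sigma (slap e sigma f) (fun z => -lam * f z) y) //.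
  rewrite slap_scale.
  rewrite /lap (@slap_ext _ _ e _ (fun z => f z * slap e sigma f z) (fun z => -lam * (f z * f z)) y); last first.
    by move=> w; rewrite Hsl; ring.
  rewrite slap_scale Hsl; ring.
have lapG : forall y, lap e G y = 2 * G2 y - 2 * lam * G y.
  move=> y; have := Fact2 y; rewrite /G2 /sGamma2 -/(G y) => ->.
  rewrite -/G; lra.
have lapf2 : forall y, lap e (fun z => f z * f z) y = 2 * G y - 2 * lam * f y ^+ 2.
  move=> y; rewrite /G /sGamma Hsl; lra.
set S := \sum_y deg R e y * f y ^+ 2.
have WG : \sum_y deg R e y * G y = lam * S.
  rewrite (eq_bigr (fun y => 2^-1 * (deg R e y * lap e (fun z => f z * f z) y) + lam * (deg R e y * f y ^+ 2))); last first.
    move=> y _; rewrite lapf2; by field.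
  by rewrite big_split /= -!mulr_sumr sum_lap0 // mulr0 add0r.
have WG2 : \sum_y deg R e y * G2 y = lam * (lam * S).
  rewrite (eq_bigr (fun y => 2^-1 * (deg R e y * lap e G y) + lam * (deg R e y * G y))); last first.
    move=> y _; rewrite lapG; by field.
  by rewrite big_split /= -!mulr_sumr sum_lap0 // mulr0 add0r WG.
have CDsum : n * (lam * (lam * S)) + K * (lam * S) <= lam * (lam * S).
  have H1 : \sum_y deg R e y * (n * (slap e sigma f y) ^+ 2 + K * G y) <= \sum_y deg R e y * G2 y.
    apply: ler_sum => y _; apply: ler_wpM2l; first exact: deg_ge0.
    exact: HCD.
  suff H2 : \sum_y deg R e y * (n * (slap e sigma f y) ^+ 2 + K * G y) = n * (lam * (lam * S)) + K * (lam * S).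
    by move: H1; rewrite H2 WG2.
  rewrite (eq_bigr (fun y => (n * lam ^+ 2) * (deg R e y * f y ^+ 2) + K * (deg R e y * G y))); last first.
    by move=> y _ /=; rewrite Hsl; ring.
  rewrite big_split /= -!mulr_sumr WG -/S; ring.
have dz : 0 < deg R e z.
  rewrite lt_def deg_ge0 andbT; apply/negP => /eqP d0.
  have := Heig z; rewrite /slap d0 invr0 mul0r oppr0 => /esym/eqP.
  by rewrite mulf_eq0 (negbTE lam0) (negbTE fz).
have S0 : 0 < S.
  rewrite /S (bigD1 z) //=; apply: (@lt_le_trans _ _ (deg R e z * f z ^+ 2)).
    by rewrite mulr_gt0 // lt_def sqr_ge0 andbT sqrf_eq0.
  rewrite lerDl sumr_ge0 // => y _; rewrite mulr_ge0 ?deg_ge0 ?sqr_ge0 //.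
have lamS : 0 <= lam * S.
  rewrite -WG sumr_ge0 // => y _; rewrite mulr_ge0 ?deg_ge0 //; exact: gamma_ge0.
have lampos : 0 < lam.
  by rewrite lt_def lam0 /= -(pmulr_lge0 _ S0).
have Lich : K <= lam * (1 - n).
  have h : 0 <= (lam * (1 - n) - K) * (lam * S).
    have -> : (lam * (1 - n) - K) * (lam * S) = lam * (lam * S) - (n * (lam * (lam * S)) + K * (lam * S)) by ring.
    by rewrite subr_ge0.
  by move: h; rewrite pmulr_lge0 ?mulr_gt0 // subr_ge0.
have HD : (alpha - 2) * lam + 2 * K = lam * (alpha - (2 - 2 * K / lam)) by field.
have D0 : 0 < (alpha - 2) * lam + 2 * K by rewrite HD mulr_gt0 // subr_gt0.
have num0 : 0 <= (alpha ^+ 2 - 4 * n) * lam + 2 * K * alpha.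
  set k := K / lam.
  have hk : k <= 1 - n by rewrite /k ler_pdivrMr // mulrC.
  have hK : K = k * lam by rewrite /k divfK.
  have ha : 2 - 2 * k < alpha by rewrite /k mulrA.
  have a0 : 0 <= alpha by lra.
  have h : 0 <= alpha * (alpha + 2 * k - 2) by apply: mulr_ge0 => //; lra.
  rewrite hK (_ : _ + _ = lam * (alpha ^+ 2 + 2 * k * alpha - 4 * n)); last by ring.
  rewrite mulr_ge0 ?ltW //; nra.
set F := fun y => sgrad2 e sigma f y + alpha * lam * f y ^+ 2.
set x0 := [arg max_(i > x) F i]%O.
have Fmax : forall y, F y <= F x0.
  by rewrite /x0; case: arg_maxP => // i _ Hi y; exact: Hi.
have lapF0 : lap e F x0 <= 0.
  rewrite /lap /slap mulr_ge0_le0 ?invr_ge0 ?deg_ge0 // sumr_le0 // => y _.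
  by rewrite mul1r subr_le0.
have lapFexp : lap e F x0 = 2 * lap e G x0 + (alpha * lam) * lap e (fun z => f z * f z) x0.
  rewrite /lap (@slap_ext _ _ e _ F (fun z => 2 * G z + (alpha * lam) * (f z * f z)) x0).
    by rewrite slap_lin.
  by move=> w; rewrite /F /sgrad2 /G; ring.
have CD0 := HCD f x0; rewrite Hsl -/(G x0) -/(G2 x0) in CD0.
move: lapF0; rewrite lapFexp lapG lapf2 => h0.
have key : F x0 * ((alpha - 2) * lam + 2 * K) <= lam * f x0 ^+ 2 * ((alpha ^+ 2 - 4 * n) * lam + 2 * K * alpha).
  rewrite /F /sgrad2 -/(G x0); rewrite -/n in CD0; lra.
have fM : f x0 ^+ 2 <= \big[Num.max/0]_(z : T) f z ^+ 2.
  exact: (@le_bigmax0 R T (fun z => f z ^+ 2) (index_enum T) x0 (mem_index_enum x0)).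
apply: (le_trans (Fmax x)).
have c0 : 0 <= ((alpha ^+ 2 - 4 * n) * lam + 2 * K * alpha) / ((alpha - 2) * lam + 2 * K) * lam.
  by apply: mulr_ge0; [apply: divr_ge0 => //; exact: ltW | exact: ltW].
apply: le_trans (ler_wpM2l c0 fM).
rewrite -ler_pdivlMr // in key.
apply: (le_trans key); rewrite le_eqVlt; apply/orP; left; apply/eqP.
by field; rewrite gt_eqF.
Qed.
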